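(* Let $n,d\ge1$, $B>0$ and $\epsilon_i>0$. For a voter $i$ with dataset $D_i=\{\langle X_1,Z_1\rangle,\dots,\langle X_n,Z_n\rangle\}$, $X_j,Z_j\in\mathbb{R}^d$, let $\overline{\boldsymbol\beta}_i(D_i)$ be a (deterministically chosen) maximizer of $\mathcal{L}(\boldsymbol\beta,D_i)=\sum_{j=1}^n\ln\Phi(\boldsymbol\beta^\top(X_j-Z_j))$ over $\{\boldsymbol\beta\in\mathbb{R}^d:\|\boldsymbol\beta\|_1\le B\}$, where $\Phi$ is the standard normal CDF. Consider the randomized algorithm (Algorithm 2) that outputs $\overline{\boldsymbol\beta}_i^*(D_i)=\overline{\boldsymbol\beta}_i(D_i)+\boldsymbol R$, where $\boldsymbol R$ has $d$ independent coordinates, each a zero-mean Laplace variable with scale $2B/\epsilon_i$. Then for each voter $i$ this algorithm satisfies $\epsilon_i$-differential privacy both in the voter-level distributed sense (VLDP) and in the record-level distributed sense (RLDP).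
   Context: VLDP: for any two datasets $D_i,D_i'$ of voter $i$, each consisting of $n$ records (arbitrarily different), and any measurable set $\mathcal{Y}$ of outputs, $\Pr[Y_i(D_i)\in\mathcal{Y}]\le e^{\epsilon_i}\Pr[Y_i(D_i')\in\mathcal{Y}]$. RLDP: the same inequality required only for pairs $D_i,D_i'$ of $n$-record datasets differing in exactly one record. The Laplace distribution with scale $\lambda$ has density $\frac{1}{2\lambda}e^{-|x|/\lambda}$. *)

(* Defs.v *)
From HB Require Import structures.
From mathcomp Require Import all_boot all_order all_algebra.
From mathcomp Require Import all_classical all_reals all_analysis.
Set Implicit Arguments. Unset Strict Implicit. Unset Printing Implicit Defensive.
Import Order.TTheory GRing.Theory Num.Theory.
Local Open Scope classical_set_scope.
Local Open Scope ring_scope.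

Definition dataset (R : realType) (n d : nat) := 'I_n -> 'rV[R]_d * 'rV[R]_d.

Definition norm1 (R : realType) (d : nat) (b : 'rV[R]_d) : R :=
  \sum_(k < d) `|b ord0 k|.

Definition Phi (R : realType) (x : R) : R :=
  fine (normal_prob 0 1 `]-oo, x]).

Definition loglik (R : realType) (n d : nat) (b : 'rV[R]_d) (D : dataset R n d)
  : R := \sum_(j < n) ln (Phi (\sum_(k < d) b ord0 k * ((D j).1 ord0 k - (D j).2 ord0 k))).

Definition is_constrained_mle (R : realType) (n d : nat) (B : R)
  (betabar : dataset R n d -> 'rV[R]_d) : Prop :=
  forall D, norm1 (betabar D) <= B /\
    (forall b : 'rV[R]_d, norm1 b <= B -> loglik b D <= loglik (betabar D) D).

Definition laplace_pdf (R : realType) (lam x : R) : R :=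
  (2 * lam)^-1 * expR (- `|x| / lam).

Definition is_laplace (R : realType) (dO : measure_display) (O : measurableType dO)
  (P : probability O R) (lam : R) (X : {RV P >-> R}) : Prop :=
  forall A : set R, measurable A ->
    P (X @^-1` A) = (\int[lebesgue_measure]_(x in A) (laplace_pdf lam x)%:E)%E.

Definition mutually_independent (R : realType) (dO : measure_display)
  (O : measurableType dO) (P : probability O R) (d : nat)
  (X : 'I_d -> {RV P >-> R}) : Prop :=
  forall A : 'I_d -> set R, (forall k, measurable (A k)) ->
    P (\bigcap_(k in [set: 'I_d]) (X k @^-1` A k)) =
    (\prod_(k < d) P (X k @^-1` A k))%E.

Definition alg2 (R : realType) (dO : measure_display) (O : measurableType dO)
  (P : probability O R) (n d : nat) (betabar : dataset R n d -> 'rV[R]_d)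
  (Rn : 'I_d -> {RV P >-> R}) (D : dataset R n d) (w : O) : d.-tuple R :=
  [tuple betabar D ord0 k + Rn k w | k < d].

Definition VLDP (R : realType) (dO : measure_display) (O : measurableType dO)
  (P : probability O R) (n d : nat) (eps : R)
  (Y : dataset R n d -> O -> d.-tuple R) : Prop :=
  forall (D D' : dataset R n d) (S : set (d.-tuple R)), measurable S ->
    (P (Y D @^-1` S) <= (expR eps)%:E * P (Y D' @^-1` S))%E.

Definition differ_in_one_record (R : realType) (n d : nat) (D D' : dataset R n d)
  : Prop := exists j, D j <> D' j /\ forall k, k <> j -> D k = D' k.

Definition RLDP (R : realType) (dO : measure_display) (O : measurableType dO)
  (P : probability O R) (n d : nat) (eps : R)
  (Y : dataset R n d -> O -> d.-tuple R) : Prop :=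
  forall (D D' : dataset R n d) (S : set (d.-tuple R)), measurable S ->
    differ_in_one_record D D' ->
    (P (Y D @^-1` S) <= (expR eps)%:E * P (Y D' @^-1` S))%E.

(* Main.v *)
Require Import Defs.
From HB Require Import structures.
From mathcomp Require Import all_boot all_order all_algebra.
From mathcomp Require Import all_classical all_reals all_analysis.
From mathcomp Require Import measurable_realfun.
From mathcomp Require Import ring lra.
Import Order.TTheory GRing.Theory Num.Theory.
Local Open Scope classical_set_scope.
Local Open Scope ring_scope.

Notation pfm m mf := (measure_function_pushforward__canonical__measure_function_Measure m mf).


Section shift.
Context {R : realType}.
Local Notation mu := (@lebesgue_measure R).

Lemma measurable_addr (t : R) :
  measurable_fun (T := measurableTypeR R) (U := measurableTypeR R) setT (fun x : R => x + t).
Proof. exact: (@measurable_funD _ R R setT (fun x => x) (fun=> t)). Qed.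

Lemma lebesgue_measure_shift (t : R) (A : set R) : measurable A ->
  pushforward mu (fun x : R => x + t) A = mu A.
Proof.
move=> mA; have := @lebesgue_measure_unique R (pfm mu (measurable_addr t)).
move=> H; rewrite -H //.
move=> _ [[a b]] _ <-.
unfold pushforward.
rewrite [X in _ = mu X](_ : _ = `](a - t), (b - t)]%classic); last first.
  by apply/seteqP; split => x /=; rewrite !in_itv /= ltrBlDr lerBrDr.
rewrite !lebesgue_measure_itv /= !lte_fin ltrD2r; case: ifP => // _.
by rewrite -!EFinB; congr EFin; lra.
Qed.

Lemma integral_shift (t : R) (f : R -> \bar R) (A : set R) :
  measurable A -> measurable_fun setT f -> (forall x, (0 <= f x)%E) ->
  (\int[mu]_(x in A) f x =
   \int[mu]_(x in (fun x => x + t)%R @^-1` A) f (x + t)%R)%E.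
Proof.
move=> mA mf f0.
rewrite -(ge0_integral_pushforward (measurable_addr t) mu mA); last 2 first.
- exact: measurable_funS mf.
- by move=> x _.
apply: (eq_measure_integral (pfm mu (measurable_addr t))) => B mB _.
symmetry. apply: (lebesgue_measure_shift t). exact mB.
Qed.
End shift.

Section laplace.
Context {R : realType} (lam : R) (lam0 : 0 < lam).

Lemma laplace_pdf_ge0 x : 0 <= laplace_pdf lam x.
Proof. by rewrite /laplace_pdf mulr_ge0 ?expR_ge0 // invr_ge0 mulr_ge0 // ltW. Qed.

Lemma measurable_laplace_pdf : measurable_fun setT (laplace_pdf lam).
Proof.
rewrite /laplace_pdf.
apply: measurable_funM => //.
apply: measurableT_comp => //.
apply: measurable_funM => //.
apply: measurable_funN.
exact: normr_measurable.
Qed.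

Lemma laplace_pdf_shift x t :
  laplace_pdf lam (x - t) <= expR (`|t| / lam) * laplace_pdf lam x.
Proof.
rewrite /laplace_pdf mulrCA ler_pM2l ?invr_gt0 ?mulr_gt0 //.
rewrite -expRD ler_expR.
have h : `|x| <= `|x - t| + `|t| by rewrite (le_trans _ (ler_normD _ _)) // subrK.
rewrite -mulrDl ler_pM2r ?invr_gt0 //; lra.
Qed.
End laplace.

Section dens.
Context {R : realType} (q : R -> R) (q0 : forall x, 0 <= q x)
  (mq : measurable_fun setT q).
Definition dens (A : set R) : \bar R := (\int[@lebesgue_measure R]_(x in A) (q x)%:E)%E.
Let dens0 : dens set0 = 0%E. Proof. by rewrite /dens integral_set0. Qed.
Let dens_ge0 A : (0 <= dens A)%E.
Proof. by apply: integral_ge0 => x _; rewrite lee_fin. Qed.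
Let dens_sigma_additive : semi_sigma_additive dens.
Proof.
move=> F mF tF mUF; rewrite /dens; apply: cvg_toP.
  apply: ereal_nondecreasing_is_cvgn => m n mn.
  apply: lee_sum_nneg_natr => // k _ _; by apply: integral_ge0 => x _; rewrite lee_fin.
symmetry; apply: (@ge0_integral_bigcup _ (measurableTypeR R) R lebesgue_measure F (fun x => (q x)%:E) mF).
- apply/measurable_EFinP; exact: measurable_funS mq.
- by move=> x _; rewrite lee_fin.
- exact: tF.
Qed.
HB.instance Definition _ := isMeasure.Build _ _ _ dens dens0 dens_ge0 dens_sigma_additive.
Definition densm : {measure set R -> \bar R} := dens.
End dens.

Definition shiftset {R : realType} (a : R) (A : set R) : set R := [set x | A (a + x)].

Lemma measurable_shiftset {R : realType} (a : R) (A : set R) :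
  measurable A -> measurable (shiftset a A).
Proof.
move=> mA; rewrite /shiftset -[X in measurable X]setTI.
exact: (measurable_funD (measurable_cst a) (@measurable_id _ R setT) measurableT mA).
Qed.

Section laplace1D.
Context {R : realType} (lam : R) (lam0 : 0 < lam) (t : R).
Local Notation pdf := (laplace_pdf lam).
Definition ell (B : set R) : \bar R := (\int[@lebesgue_measure R]_(x in B) (pdf x)%:E)%E.
Definition qd (x : R) : R := expR (`|t| / lam) * pdf x - pdf (x - t).
Lemma qd_ge0 x : 0 <= qd x.
Proof. by rewrite subr_ge0 laplace_pdf_shift. Qed.
Lemma measurable_qd : measurable_fun setT qd.
Proof.
apply: measurable_funB.
  by apply: measurable_funM => //; exact: measurable_laplace_pdf.
apply: measurableT_comp; first exact: measurable_laplace_pdf.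
by apply: measurable_funB.
Qed.

Lemma ell_shift a B : measurable B ->
  ((expR (`|t| / lam))%:E * ell (shiftset a B) =
   ell (shiftset (a + t) B) + densm qd qd_ge0 measurable_qd (shiftset a B))%E.
Proof.
move=> mB.
have msa : measurable (shiftset a B) by exact: measurable_shiftset.
have mpdf : measurable_fun setT (fun x => (pdf x)%:E).
  by apply/measurable_EFinP; exact: measurable_laplace_pdf.
rewrite /ell [X in (_ = X + _)%E](integral_shift (- t)); last 3 first.
- exact: measurable_shiftset.
- exact: mpdf.
- by move=> x; rewrite lee_fin laplace_pdf_ge0.
rewrite (_ : _ @^-1` _ = shiftset a B); last first.
  apply: funext => x; rewrite /shiftset /preimage /=.
  by congr B; rewrite -addrA [t + _]addrC subrK.
rewrite /densm /= /dens -ge0_integralD //; last 4 first.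
- by move=> x _; rewrite lee_fin laplace_pdf_ge0.
- apply/measurable_funTS/measurable_EFinP.
  apply: measurableT_comp; first exact: measurable_laplace_pdf.
  by apply: measurable_funD.
- by move=> x _; rewrite lee_fin qd_ge0.
- by apply/measurable_funTS/measurable_EFinP; exact: measurable_qd.
rewrite -ge0_integralZl //; try (by move=> x _; rewrite lee_fin laplace_pdf_ge0);
  try (by rewrite lee_fin expR_ge0);
  try (by apply/measurable_funTS/measurable_EFinP; exact: measurable_laplace_pdf).
apply: eq_integral => x _; rewrite -EFinD -EFinM; congr EFin; rewrite /qd; ring.
Qed.
End laplace1D.

Section rect.
Context {R : realType} (d : nat).

Definition rect (A : 'I_d -> set R) : set (d.-tuple R) :=
  [set x | forall k, A k (tnth x k)].

Definition rects : set (set (d.-tuple R)) :=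
  [set S | exists2 A : 'I_d -> set R, (forall k, measurable (A k)) & S = rect A].

Lemma rectsI : setI_closed rects.
Proof.
move=> _ _ [A mA ->] [B mB ->]; exists (fun k => A k `&` B k).
  by move=> k; apply: measurableI.
by apply/seteqP; split => x /=; [move=> [HA HB] k; split|move=> H; split => k; case: (H k)].
Qed.

Lemma rectT : rects setT.
Proof. by exists (fun=> setT) => //; apply/seteqP; split. Qed.

Lemma rect_measurable A : (forall k, measurable (A k)) -> measurable (rect A).
Proof.
move=> mA.
have -> : rect A = \bigcap_(k in [set: 'I_d]) ((@tnth d R)^~ k @^-1` A k).
  by apply/seteqP; split => x /=; [move=> H k _|move=> H k; apply: H].
apply: fin_bigcap_measurable; first exact: finite_finset.
move=> k _; rewrite -[X in measurable X]setTI; exact: measurable_tnth.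
Qed.

Lemma rects_gen : @measurable _ (d.-tuple R) = <<s rects >>.
Proof.
apply/seteqP; split; last first.
  apply: smallest_sub; first exact: sigma_algebra_measurable.
  by move=> _ [A mA ->]; exact: rect_measurable.
apply: smallest_sub; first exact: smallest_sigma_algebra.
apply: (big_ind (fun X => X `<=` <<s rects >>)).
- by move=> X [].
- by move=> X Y HX HY Z [/HX|/HY].
move=> i _ X [B mB <-]; apply: sub_sigma_algebra.
exists (fun k => if k == i then B else setT).
  by move=> k; case: ifP.
apply/seteqP; split => x /=.
  by move=> [_ Hx] k; case: eqP => // ->.
by move=> H; split => //; have := H i; rewrite eqxx.
Qed.
End rect.
Arguments rect {R d}. Arguments rects {R d}. Arguments rects_gen {R d}. Arguments rectsI {R d}. Arguments rectT {R d}.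


Section main.
Context (R : realType) (dO : measure_display) (O : measurableType dO)
  (P : probability O R) (d : nat) (Rn : 'I_d -> {RV P >-> R}) (lam : R).
Hypothesis lam0 : 0 < lam.
Hypothesis Hind : mutually_independent Rn.
Hypothesis Hlap : forall k, is_laplace lam (Rn k).

Definition fv (v : 'I_d -> R) (w : O) : d.-tuple R := [tuple v k + Rn k w | k < d].

Lemma mfv v : measurable_fun setT (fv v).
Proof.
apply/measurable_fun_tnthP => i.
rewrite (_ : _ \o _ = fun w => v i + Rn i w); last first.
  by apply/funext => w /=; rewrite tnth_mktuple.
apply: measurable_funD => //; exact: measurable_funPT.
Qed.

Lemma fv_rect v A : fv v @^-1` rect A =
  \bigcap_(k in [set: 'I_d]) (Rn k @^-1` shiftset (v k) (A k)).
Proof.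
apply/seteqP; split => w /=.
  by move=> H k _; have := H k; rewrite tnth_mktuple.
by move=> H k; rewrite tnth_mktuple; exact: H.
Qed.

Lemma P_fv_rect v A : (forall k, measurable (A k)) ->
  P (fv v @^-1` rect A) = (\prod_(k < d) ell lam (shiftset (v k) (A k)))%E.
Proof.
move=> mA; rewrite fv_rect Hind; last by move=> k; exact: measurable_shiftset.
by apply: eq_bigr => k _; apply: Hlap; exact: measurable_shiftset.
Qed.

Lemma step (v w : 'I_d -> R) (j : 'I_d) (t : R) :
  w j = v j + t -> (forall k, k != j -> w k = v k) ->
  forall S, measurable S ->
  (P (fv w @^-1` S) <= (expR (`|t| / lam))%:E * P (fv v @^-1` S))%E.
Proof.
move=> wj wk.
pose rho := @densm R (qd lam t) (@qd_ge0 R lam lam0 t) (measurable_qd lam t).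
pose g (xw : R * O) : d.-tuple R :=
  [tuple if k == j then v k + xw.1 else v k + Rn k xw.2 | k < d].
have mg : measurable_fun setT g.
  apply/measurable_fun_tnthP => i.
  rewrite (_ : _ \o _ = fun xw => if i == j then v i + xw.1 else v i + Rn i xw.2); last first.
    by apply/funext => xw /=; rewrite tnth_mktuple.
  case: (i == j) => /=.
    by apply: measurable_funD.
  apply: measurable_funD => //; apply: measurableT_comp => //; exact: measurable_funPT.
have g_rect A : g @^-1` rect A = shiftset (v j) (A j) `*`
    \bigcap_(k in [set: 'I_d]) (Rn k @^-1` (if k == j then setT else shiftset (v k) (A k))).
  apply/seteqP; split => -[x o] /=.
    move=> H; split.
      by have := H j; rewrite tnth_mktuple eqxx.
    by move=> k _; have := H k; rewrite tnth_mktuple; case: ifP.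
  move=> [Hj H] k; rewrite tnth_mktuple; case: ifP => [/eqP ->//|kj].
  by have := H k I; rewrite kj.
pose K : {nonneg R} := NngNum (expR_ge0 (`|t| / lam)).
pose m1 := mscale K (pfm P (mfv v)).
pose m2 := measure_add (pfm P (mfv w)) (pfm (rho \x P)%E mg).
have E : forall S, measurable S -> m1 S = m2 S.
  apply: (measure_unique rects (fun=> setT)).
  - exact: rects_gen.
  - exact: rectsI.
  - by move=> _; exact: rectT.
  - by rewrite bigcup_const.
  - move=> _ [A mA ->].
    rewrite /m1 /m2 /= /msum /mscale /= !big_ord_recl big_ord0 adde0 /=.
    rewrite /pushforward !P_fv_rect // g_rect.
    have mX : measurable (shiftset (v j) (A j)) by exact: measurable_shiftset.
    have mY : measurable (\bigcap_(k in [set: 'I_d]) (Rn k @^-1` (if k == j then setT else shiftset (v k) (A k)))).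
      apply: fin_bigcap_measurable; first exact: finite_finset.
      move=> k _; rewrite -[X in measurable X]setTI; apply: measurable_funPT => //.
      by case: ifP => _ //; exact: measurable_shiftset.
    have := product_measure1E rho P mX mY.
    rewrite /= => ->.
    rewrite Hind; last by move=> k; case: ifP => _ //; exact: measurable_shiftset.
    rewrite (bigD1 j) //= [X in (_ = X + _)%E](bigD1 j) //= [X in (_ = _ + _ * X)%E](bigD1 j) //=.
    rewrite eqxx preimage_setT probability_setT mul1e.
    have E3 : (\prod_(k < d | k != j) P (Rn k @^-1` (if k == j then setT else shiftset (v k) (A k))) =
        \prod_(k < d | k != j) ell lam (shiftset (v k) (A k)))%E.
      apply: eq_bigr => k kj; rewrite (negbTE kj); apply: Hlap; exact: measurable_shiftset.
    have E2 : (\prod_(k < d | k != j) ell lam (shiftset (w k) (A k)) =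
        \prod_(k < d | k != j) ell lam (shiftset (v k) (A k)))%E.
      by apply: eq_bigr => k kj; rewrite wk.
    rewrite E3 E2 wj muleA (@ell_shift R lam lam0 t (v j) (A j) (mA j)) ge0_muleDl //.
      by apply: integral_ge0 => x _; rewrite lee_fin laplace_pdf_ge0.
  - move=> _; rewrite /m1 /= /mscale /= /pushforward.
    by rewrite (_ : _ @^-1` _ = setT) // probability_setT mule1 ltry.
move=> S mS; have := E S mS.
rewrite /m1 /m2 /= /mscale /= measure_addE /= /pushforward => ->.
apply: leeDl; exact: (measure_ge0 (pfm (rho \x P)%E mg) S).
Qed.

Lemma chain (b b' : 'I_d -> R) (S : set (d.-tuple R)) : measurable S ->
  forall m, (m <= d)%N ->
  (P (fv (fun k => if (k < m)%N then b k else b' k) @^-1` S) <=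
   (expR ((\sum_(k < d | (k < m)%N) `|b k - b' k|) / lam))%:E * P (fv b' @^-1` S))%E.
Proof.
move=> mS; elim=> [|m IH] hm.
  rewrite big_pred0 => [|k]; last by rewrite ltn0.
  rewrite mul0r expR0 mul1e.
  by rewrite (_ : (fun k : 'I_d => if (k < 0)%N then b k else b' k) = b') //; apply/funext => k.
have hm' : (m < d)%N by [].
pose j := Ordinal hm'.
pose v := fun k : 'I_d => if (k < m)%N then b k else b' k.
pose w := fun k : 'I_d => if (k < m.+1)%N then b k else b' k.
have wj : w j = v j + (b j - b' j) by rewrite /w /v /= ltnSn ltnn addrC subrK.
have wk : forall k, k != j -> w k = v k.
  move=> k kj; rewrite /w /v ltnS leq_eqVlt.
  rewrite (_ : (k == m :> nat) = false) //; apply/negbTE; apply: contra kj => /eqP km.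
  by apply/eqP; apply: val_inj.
have H := @step v w j (b j - b' j) wj wk S mS.
apply: (le_trans H).
rewrite (bigD1 j) /=; last by rewrite ltnSn.
rewrite (eq_bigl (fun k : 'I_d => (k < m)%N)); last first.
  move=> k; rewrite ltnS leq_eqVlt.
  case: (ltnP k m) => km.
    rewrite orbT /=; apply/negP => /eqP kj; move: km; rewrite kj /= ltnn //.
  rewrite orbF; case: (k =P m :> nat) => [km'|] //=.
  by apply/negbTE; rewrite negbK; apply/eqP; exact: val_inj.
rewrite mulrDl expRD EFinM -muleA; apply: lee_wpmul2l; first by rewrite lee_fin expR_ge0.
exact: IH (ltnW hm).
Qed.

End main.

Theorem theorem3 (R : realType) (n d : nat) (B eps : R)
  (dO : measure_display) (O : measurableType dO) (P : probability O R)
  (betabar : dataset R n d -> 'rV[R]_d) (Rn : 'I_d -> {RV P >-> R}) :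
  (1 <= n)%N -> (1 <= d)%N -> 0 < B -> 0 < eps ->
  is_constrained_mle B betabar ->
  mutually_independent Rn ->
  (forall k, is_laplace (2 * B / eps) (Rn k)) ->
  VLDP P eps (alg2 betabar Rn) /\ RLDP P eps (alg2 betabar Rn).
Proof.
move=> n1 d1 B0 eps0 Hmle Hind Hlap.
have lam0 : 0 < 2 * B / eps by rewrite divr_gt0 // mulr_gt0.
have key : forall D D' S, measurable S ->
    (P (alg2 betabar Rn D @^-1` S) <= (expR eps)%:E * P (alg2 betabar Rn D' @^-1` S))%E.
  move=> D D' S mS.
  pose b := fun k => betabar D ord0 k.
  pose b' := fun k => betabar D' ord0 k.
  have := @chain R dO O P d Rn (2 * B / eps) lam0 Hind Hlap b b' S mS d (leqnn d).
  rewrite (_ : (fun k : 'I_d => if (k < d)%N then b k else b' k) = b); last first.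
    by apply/funext => k; rewrite ltn_ord.
  rewrite (eq_bigl xpredT); last by move=> k; rewrite ltn_ord.
  move=> H; apply: (le_trans H); apply: lee_wpmul2r; first exact: measure_ge0.
  rewrite lee_fin ler_expR.
  have h1 : \sum_(k < d) `|b k - b' k| <= 2 * B.
    have [HD _] := Hmle D; have [HD' _] := Hmle D'.
    apply: (le_trans (y := \sum_(k < d) (`|b k| + `|b' k|))).
      by apply: ler_sum => k _; exact: ler_normB.
    rewrite big_split /=; rewrite -/(norm1 (betabar D)) -/(norm1 (betabar D')).
    lra.
  rewrite ler_pdivrMr // mulrCA mulfV ?gt_eqF // mulr1.
  exact: h1.
split; first by move=> D D' S mS; exact: key.
by move=> D D' S mS _; exact: key.
Qed.
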